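(* Let $N\ge3$ and suppose the settings $X_j,X_j'$ ($j=1,\dots,N$) satisfy (ND) and $\langle I^N_{CHSH}\rangle=\pm2\sqrt2$. Then the Bloch vectors $\vec n_j,\vec n_j'$ for $j=1,\dots,N-1$ fall into one of the following three cases: (i) $\vec n_j=(0,0,\pm1)$ and $\vec n_j'=(\cos\varphi_j',\sin\varphi_j',0)$ for all $j=1,\dots,N-1$; (ii) $\vec n_j=(\cos\varphi_j,\sin\varphi_j,0)$ and $\vec n_j'=(0,0,\pm1)$ for all $j=1,\dots,N-1$; (iii) $\vec n_j=(\cos\varphi_j,\sin\varphi_j,0)$ and $\vec n_j'=(\cos\varphi_j',\sin\varphi_j',0)$ for all $j=1,\dots,N-1$. (The signs $\pm$ may depend on $j$.) If $N$ is odd, only case (iii) can occur.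
   Context: $|G\rangle=\frac{1}{\sqrt2}(|0\cdots0\rangle+|1\cdots1\rangle)$ ($N$ qubits). $\vec\sigma=(\sigma_x,\sigma_y,\sigma_z)$ Pauli matrices. For $j=1,\dots,N$: $X_j=\vec n_j\cdot\vec\sigma$, $X_j'=\vec n_j'\cdot\vec\sigma$ with $\vec n_j=(\sin\alpha_j\cos\varphi_j,\sin\alpha_j\sin\varphi_j,\cos\alpha_j)$, $\vec n_j'=(\sin\alpha_j'\cos\varphi_j',\sin\alpha_j'\sin\varphi_j',\cos\alpha_j')$, $\alpha_j,\alpha_j'\in[0,\pi]$. $\mathbb A_0=\bigotimes_{j=1}^{N-1}X_j$, $\mathbb A_1=\bigotimes_{j=1}^{N-1}X_j'$, $\mathbb B_0=X_N$, $\mathbb B_1=X_N'$, and $\langle I^N_{CHSH}\rangle=\sum_{a,b\in\{0,1\}}(-1)^{ab}\langle G|\mathbb A_a\otimes\mathbb B_b|G\rangle$. (ND): $(\prod_{j=1}^{N-1}\cos\alpha_j)^2+(\prod_{j=1}^{N-1}\sin\alpha_j)^2\neq0$, $(\prod_{j=1}^{N-1}\cos\alpha_j')^2+(\prod_{j=1}^{N-1}\sin\alpha_j')^2\neq0$, and if $N$ is odd, $\sin\alpha_N\neq0$ and $\sin\alpha_N'\neq0$. *)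

(* Defs.v *)
From HB Require Import structures.
From mathcomp Require Import all_boot all_order all_algebra.
From mathcomp Require Import all_classical all_reals all_analysis.
From mathcomp Require Import complex.
Set Implicit Arguments. Unset Strict Implicit. Unset Printing Implicit Defensive.
Import Order.TTheory GRing.Theory Num.Theory.
Local Open Scope ring_scope.

Section Defs.
Variable R : realType.

Definition bloch (a p : R) : R * R * R := (sin a * cos p, sin a * sin p, cos a).

(* The 2x2 matrix  n . sigma  in the computational basis |0> (false), |1> (true):
   [[ nz , nx - i ny ], [ nx + i ny , -nz ]]. *)
Definition pauli_dot (n : R * R * R) (r c : bool) : R[i] :=
  let: (nx, ny, nz) := n in
  match r, c with
  | false, false => Complex nz 0
  | false, true  => Complex nx (- ny)
  | true,  false => Complex nx ny
  | true,  true  => Complex (- nz) 0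
  end.

(* N-qubit computational basis states are bit strings b : {ffun 'I_N -> bool}.
   Matrix element <b| O_1 (x) ... (x) O_N |c> = prod_j (O_j)_{b_j c_j}. *)
Definition tens_elt (N : nat) (O : 'I_N -> bool -> bool -> R[i])
  (b c : {ffun 'I_N -> bool}) : R[i] := \prod_(j < N) O j (b j) (c j).

Definition expect (N : nat) (psi : {ffun 'I_N -> bool} -> R[i])
  (O : 'I_N -> bool -> bool -> R[i]) : R[i] :=
  \sum_(b : {ffun 'I_N -> bool}) \sum_(c : {ffun 'I_N -> bool})
     (psi b)^* * tens_elt O b c * psi c.

Definition GHZ (N : nat) (b : {ffun 'I_N -> bool}) : R[i] :=
  if (b == [ffun => false]) || (b == [ffun => true])
  then Complex (Num.sqrt 2)^-1 0 else 0.

(* Site operators of A_a (x) B_b: sites 0..N-2 carry X_j (a=0) or X_j' (a=1),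
   site N-1 carries X_N (b=0) or X_N' (b=1).  Angles indexed by 'I_N. *)
Definition chsh_ops (N : nat) (al al' ph ph' : 'I_N -> R) (a b : bool)
  (j : 'I_N) : bool -> bool -> R[i] :=
  if (j < N.-1)%N then
    (if a then pauli_dot (bloch (al' j) (ph' j)) else pauli_dot (bloch (al j) (ph j)))
  else
    (if b then pauli_dot (bloch (al' j) (ph' j)) else pauli_dot (bloch (al j) (ph j))).

Definition I_CHSH (N : nat) (al al' ph ph' : 'I_N -> R) : R[i] :=
  \sum_(a : bool) \sum_(b : bool)
     (-1) ^+ (a && b) * expect (@GHZ N) (chsh_ops al al' ph ph' a b).

Definition ND (N : nat) (al al' : 'I_N -> R) : Prop :=
  (\prod_(j < N | (j < N.-1)%N) cos (al j)) ^+ 2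
    + (\prod_(j < N | (j < N.-1)%N) sin (al j)) ^+ 2 != 0 /\
  (\prod_(j < N | (j < N.-1)%N) cos (al' j)) ^+ 2
    + (\prod_(j < N | (j < N.-1)%N) sin (al' j)) ^+ 2 != 0 /\
  (odd N -> forall j : 'I_N, val j = N.-1 -> sin (al j) != 0 /\ sin (al' j) != 0).

End Defs.

(* Main.v *)
Require Import Defs.
From HB Require Import structures.
From mathcomp Require Import all_boot all_order all_algebra.
From mathcomp Require Import all_classical all_reals all_analysis.
From mathcomp Require Import complex.
From mathcomp Require Import ring lra.
Import Order.TTheory GRing.Theory Num.Theory.
Local Open Scope ring_scope.

Notation RE := complex.Re.
Notation IM := complex.Im.

Lemma core (R : realFieldType) (r e k p0 q0 c0 p1 q1 c1 x0 y0 z0 x1 y1 z1 : R) :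
  r * r = 2 -> e * e = 1 -> k * k = k ->
  x0 ^+ 2 + y0 ^+ 2 + z0 ^+ 2 = 1 -> x1 ^+ 2 + y1 ^+ 2 + z1 ^+ 2 = 1 ->
  p0 ^+ 2 + q0 ^+ 2 + k * c0 ^+ 2 <= 1 -> p1 ^+ 2 + q1 ^+ 2 + k * c1 ^+ 2 <= 1 ->
  k * c0 * (z0 + z1) + p0 * (x0 + x1) + q0 * (y0 + y1)
  + (k * c1 * (z0 - z1) + p1 * (x0 - x1) + q1 * (y0 - y1)) = e * 2 * r ->
  p0 ^+ 2 + q0 ^+ 2 + k * c0 ^+ 2 = 1 /\ p1 ^+ 2 + q1 ^+ 2 + k * c1 ^+ 2 = 1.
Proof.
move=> hr he hk h0 h1 u0 u1 hI.
set I := (X in X = _) in hI.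
have sq : 0 <= (r * e * p0 - (x0 + x1)) ^+ 2 + (r * e * q0 - (y0 + y1)) ^+ 2
   + (r * e * (k * c0) - (z0 + z1)) ^+ 2 + (r * e * p1 - (x0 - x1)) ^+ 2
   + (r * e * q1 - (y0 - y1)) ^+ 2 + (r * e * (k * c1) - (z0 - z1)) ^+ 2.
  by rewrite !addr_ge0 ?sqr_ge0.
have E : (r * e * p0 - (x0 + x1)) ^+ 2 + (r * e * q0 - (y0 + y1)) ^+ 2
   + (r * e * (k * c0) - (z0 + z1)) ^+ 2 + (r * e * p1 - (x0 - x1)) ^+ 2
   + (r * e * q1 - (y0 - y1)) ^+ 2 + (r * e * (k * c1) - (z0 - z1)) ^+ 2
   = (r * r) * (e * e) * (p0 ^+ 2 + q0 ^+ 2 + (k * k) * c0 ^+ 2 + (p1 ^+ 2 + q1 ^+ 2 + (k * k) * c1 ^+ 2))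
     - 2 * r * e * I + 2 * (x0 ^+ 2 + y0 ^+ 2 + z0 ^+ 2) + 2 * (x1 ^+ 2 + y1 ^+ 2 + z1 ^+ 2).
  rewrite /I; ring.
rewrite E hr he hk hI h0 h1 in sq.
have : 2 * r * e * (e * 2 * r) = 8.
  have -> : 2 * r * e * (e * 2 * r) = 4 * (r * r) * (e * e) by ring.
  by rewrite hr he; ring.
move=> h8; rewrite h8 in sq.
split; lra.
Qed.

Lemma core_z (R : realFieldType) (r e c0 c1 z0 z1 : R) :
  r * r = 2 -> e * e = 1 -> c0 ^+ 2 = 1 -> c1 ^+ 2 = 1 -> z0 ^+ 2 <= 1 -> z1 ^+ 2 <= 1 ->
  c0 * (z0 + z1) + c1 * (z0 - z1) = e * 2 * r -> False.
Proof.
move=> hr he hc0 hc1 hz0 hz1 hI.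
have I8 : (c0 * (z0 + z1) + c1 * (z0 - z1)) ^+ 2 = 8.
  rewrite hI; have -> : (e * 2 * r) ^+ 2 = 4 * (r * r) * (e * e) by ring.
  rewrite hr he; ring.
move/eqP: hc0; rewrite sqrf_eq1 => /orP[] /eqP E0; move/eqP: hc1; rewrite sqrf_eq1 => /orP[] /eqP E1;
  rewrite E0 E1 in I8; nra.
Qed.

Lemma prod_eq1 (R : realFieldType) k (h : 'I_k -> R) :
  (forall i, 0 <= h i <= 1) -> \prod_i h i = 1 -> forall i, h i = 1.
Proof.
move=> hb hp i; move: hp; rewrite (bigD1 i) //=.
have r1 : \prod_(j | j != i) h j <= 1 by apply: prodr_ile1 => j _; exact: hb.
have r0 : 0 <= \prod_(j | j != i) h j by apply: prodr_ge0 => j _; case/andP: (hb j).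
case/andP: (hb i) => a0 a1; nra.
Qed.

Lemma prod_sum_le1 (R : realFieldType) k (f g : 'I_k.+1 -> R) :
  (forall i, 0 <= f i <= 1) -> (forall i, 0 <= g i <= 1) -> (forall i, f i + g i = 1) ->
  \prod_i f i + \prod_i g i <= 1.
Proof.
move=> fb gb fg.
rewrite big_ord_recl [X in _ + X <= _]big_ord_recl.
set X := \prod_(i < k) _. set Y := \prod_(i < k) _.
have X1 : X <= 1 by apply: prodr_ile1 => j _; exact: fb.
have Y1 : Y <= 1 by apply: prodr_ile1 => j _; exact: gb.
have X0 : 0 <= X by apply: prodr_ge0 => j _; case/andP: (fb (lift ord0 j)).
have Y0 : 0 <= Y by apply: prodr_ge0 => j _; case/andP: (gb (lift ord0 j)).
have := fg ord0; case/andP: (fb ord0) => ? ?; case/andP: (gb ord0) => ? ?; nra.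
Qed.

Lemma prod_split01 (R : realFieldType) k (f g : 'I_k.+2 -> R) :
  (forall i, 0 <= f i) -> (forall i, 0 <= g i) -> (forall i, f i + g i = 1) ->
  \prod_i f i + \prod_i g i = 1 -> (forall i, f i = 1) \/ (forall i, g i = 1).
Proof.
move=> f0 g0 fg.
have fb : forall i, 0 <= f i <= 1 by move=> i; apply/andP; split => //; have := g0 i; have := fg i; lra.
have gb : forall i, 0 <= g i <= 1 by move=> i; apply/andP; split => //; have := f0 i; have := fg i; lra.
rewrite big_ord_recl [X in _ + X]big_ord_recl.
set X := \prod_(i < k.+1) f (lift ord0 i).
set Y := \prod_(i < k.+1) g (lift ord0 i).
have X1 : X <= 1 by apply: prodr_ile1 => j _; exact: fb.
have Y1 : Y <= 1 by apply: prodr_ile1 => j _; exact: gb.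
have X0 : 0 <= X by apply: prodr_ge0 => j _.
have Y0 : 0 <= Y by apply: prodr_ge0 => j _.
have XY : X + Y <= 1.
  rewrite /X /Y !big_ord_recl.
  set X' := \prod_(i < k) _. set Y' := \prod_(i < k) _.
  have X'1 : X' <= 1 by apply: prodr_ile1 => j _; exact: fb.
  have Y'1 : Y' <= 1 by apply: prodr_ile1 => j _; exact: gb.
  have X'0 : 0 <= X' by apply: prodr_ge0 => j _.
  have Y'0 : 0 <= Y' by apply: prodr_ge0 => j _.
  have := fg (lift ord0 ord0); have := f0 (lift ord0 ord0); have := g0 (lift ord0 ord0); nra.
move=> h.
have := fg ord0; have := f0 ord0; have := g0 ord0; move=> ga fa fga.
have [[hf hX] | [hg hY]] : (f ord0 = 1 /\ X = 1) \/ (g ord0 = 1 /\ Y = 1).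
  have m1 : 0 <= f ord0 * (1 - X) by apply: mulr_ge0 => //; lra.
  have m2 : 0 <= g ord0 * (1 - Y) by apply: mulr_ge0 => //; lra.
  have e1 : f ord0 * (1 - X) = 0 by nra.
  have e2 : g ord0 * (1 - Y) = 0 by nra.
  move/eqP: e1; rewrite mulf_eq0 => /orP[/eqP hf0 | /eqP hX].
    right; split; first lra.
    by move/eqP: e2; rewrite mulf_eq0 => /orP[/eqP|/eqP]; lra.
  left; split; last lra.
  by move/eqP: e2; rewrite mulf_eq0 => /orP[/eqP|/eqP]; lra.
- left => i; case: (unliftP ord0 i) => [j ->|->] //.
  exact: (@prod_eq1 _ _ (fun j => f (lift ord0 j)) (fun j => fb _) hX j).
- right => i; case: (unliftP ord0 i) => [j ->|->] //.
  exact: (@prod_eq1 _ _ (fun j => g (lift ord0 j)) (fun j => gb _) hY j).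
Qed.

Section H.
Variable R : realType.
Notation f0 := ([ffun => false] : {ffun 'I__ -> bool}).
Notation f1 := ([ffun => true] : {ffun 'I__ -> bool}).
Definition kC : R[i] := Complex (Num.sqrt 2)^-1 0.

Lemma f10 n : ([ffun => true] : {ffun 'I_n.+1 -> bool}) != [ffun => false].
Proof. apply/eqP => h; have := congr1 (fun f : {ffun _ -> bool} => f ord0) h; by rewrite !ffunE. Qed.

Lemma GHZ0 n (c : {ffun 'I_n.+1 -> bool}) : c != f0 -> c != f1 -> GHZ R c = 0.
Proof. by rewrite /GHZ => /negbTE -> /negbTE ->. Qed.

Lemma sum_GHZ_r n (F : {ffun 'I_n.+1 -> bool} -> R[i]) :
  \sum_c F c * GHZ R c = (F f0 + F f1) * kC.
Proof.
rewrite (bigD1 f0) //= (bigD1 f1) /=; last by rewrite f10.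
rewrite big1 ?addr0; last first.
  by move=> c /andP[h1 h0]; rewrite GHZ0 ?mulr0.
rewrite /GHZ eqxx /= eqxx orbT mulrDl; congr (_ + _).
Qed.

Lemma kC_conj : kC^* = kC.
Proof. apply: conj_Creal; by rewrite complex_real. Qed.

Lemma sum_GHZ_l n (F : {ffun 'I_n.+1 -> bool} -> R[i]) :
  \sum_c (GHZ R c)^* * F c = kC * (F f0 + F f1).
Proof.
rewrite (bigD1 f0) //= (bigD1 f1) /=; last by rewrite f10.
rewrite big1 ?addr0; last first.
  by move=> c /andP[h1 h0]; rewrite GHZ0 ?conjC0 ?mul0r.
rewrite /GHZ eqxx /= eqxx orbT -/kC kC_conj mulrDr.
by [].
Qed.


Lemma ReD (x y : R[i]) : RE (x + y) = RE x + RE y. Proof. by case: x; case: y. Qed.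
Lemma ImD (x y : R[i]) : IM (x + y) = IM x + IM y. Proof. by case: x; case: y. Qed.
Lemma ReM (x y : R[i]) : RE (x * y) = RE x * RE y - IM x * IM y. Proof. by case: x; case: y. Qed.
Lemma ImM (x y : R[i]) : IM (x * y) = RE x * IM y + IM x * RE y. Proof. case: x => a b; case: y => c d /=; ring. Qed.
Lemma ReN (x : R[i]) : RE (- x) = - RE x. Proof. by case: x. Qed.
Lemma ReC (a b : R) : RE (Complex a b) = a. Proof. by []. Qed.
Lemma ImC (a b : R) : IM (Complex a b) = b. Proof. by []. Qed.
Lemma Rerc (a : R) : RE (a%:C%C) = a. Proof. by []. Qed.
Lemma Imrc (a : R) : IM (a%:C%C) = 0. Proof. by []. Qed.
Lemma Reconj (x : R[i]) : RE (conjc x) = RE x. Proof. by case: x. Qed.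
Lemma Imconj (x : R[i]) : IM (conjc x) = - IM x. Proof. by case: x. Qed.

Lemma tens_const n (O : 'I_n -> bool -> bool -> R[i]) r c :
  tens_elt O [ffun => r] [ffun => c] = \prod_j O j r c.
Proof. by apply: eq_bigr => j _; rewrite !ffunE. Qed.

Lemma expect_GHZ n (O : 'I_n.+1 -> bool -> bool -> R[i]) :
  expect (@GHZ R n.+1) O = kC * ((\prod_j O j false false + \prod_j O j false true) * kC
     + (\prod_j O j true false + \prod_j O j true true) * kC).
Proof.
rewrite /expect.
have inner : forall b : {ffun 'I_n.+1 -> bool},
  \sum_c (GHZ R b)^* * tens_elt O b c * GHZ R c =
  (GHZ R b)^* * ((tens_elt O b [ffun => false] + tens_elt O b [ffun => true]) * kC).
  move=> b; rewrite -sum_GHZ_r big_distrr /=.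
  by apply: eq_bigr => c _; rewrite mulrA.
rewrite (eq_bigr _ (fun b _ => inner b)) sum_GHZ_l.
by rewrite !tens_const.
Qed.

Lemma rcM (a b : R) : (a * b)%:C%C = a%:C%C * b%:C%C.
Proof.
have -> : (a%:C * b%:C = Complex (a*b - 0*0) (a*0+0*b))%C by [].
by rewrite !mulr0 mul0r subr0 addr0.
Qed.
Lemma rc1 : (1 : R)%:C%C = 1. Proof. by []. Qed.
Lemma rc_prod k (f : 'I_k -> R) : (\prod_i f i)%:C%C = \prod_i (f i)%:C%C.
Proof.
elim: k f => [|k IH] f; first by rewrite !big_ord0.
by rewrite !big_ord_recr /= rcM IH.
Qed.
Lemma PD00 k (v : 'I_k -> R * R * R) :
  \prod_i pauli_dot (v i) false false = (\prod_i (v i).2)%:C%C.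
Proof. rewrite rc_prod; apply: eq_bigr => i _; by case: (v i) => [[x y] z]. Qed.

Lemma rcX (a : R) k : (a ^+ k)%:C%C = (a%:C%C) ^+ k.
Proof. elim: k => [|k IH]; first by rewrite !expr0. by rewrite !exprS rcM IH. Qed.

Lemma PD11 k (v : 'I_k -> R * R * R) :
  \prod_i pauli_dot (v i) true true = ((-1) ^+ k * \prod_i (v i).2)%:C%C.
Proof.
rewrite rcM rc_prod rcX.
have -> : \prod_i pauli_dot (v i) true true = \prod_(i < k) ((-1)%:C%C * ((v i).2)%:C%C).
  apply: eq_bigr => i _; case: (v i) => [[x y] z] /=; by rewrite -rcM mulN1r.
by rewrite big_split /= prodr_const card_ord.
Qed.

Lemma PD10 k (v : 'I_k -> R * R * R) :
  \prod_i pauli_dot (v i) true false = conjc (\prod_i pauli_dot (v i) false true).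
Proof.
rewrite rmorph_prod; apply: eq_bigr => i _; case: (v i) => [[x y] z] /=.
by rewrite /conjc opprK.
Qed.

Lemma RE1 : RE (1 : R[i]) = 1. Proof. by []. Qed.
Lemma IM1 : IM (1 : R[i]) = 0. Proof. by []. Qed.

Lemma PDnorm k (f : 'I_k -> R[i]) :
  RE (\prod_i f i) ^+ 2 + IM (\prod_i f i) ^+ 2 = \prod_i (RE (f i) ^+ 2 + IM (f i) ^+ 2).
Proof.
elim: k f => [|k IH] f; first by rewrite !big_ord0 RE1 IM1; ring.
rewrite !big_ord_recr /= ReM ImM -IH; ring.
Qed.

Lemma Re_expect m (vA : 'I_m.+2 -> R * R * R) (w : R * R * R)
  (O : 'I_m.+3 -> bool -> bool -> R[i]) :
  (forall r c, \prod_j O j r c = (\prod_i pauli_dot (vA i) r c) * pauli_dot w r c) ->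
  RE (expect (@GHZ R m.+3) O) =
  ((Num.sqrt 2)^-1) ^+ 2 * ((\prod_i (vA i).2) * w.2 * (1 - (-1) ^+ m) +
     2 * (RE (\prod_i pauli_dot (vA i) false true) * w.1.1
          + IM (\prod_i pauli_dot (vA i) false true) * w.1.2)).
Proof.
move=> hO; rewrite expect_GHZ !hO PD00 PD11 PD10.
set P := \prod_i pauli_dot (vA i) false true.
clear hO; case: w => [[x y] z] /=.
rewrite /kC !(ReM, ImM, ReD, ImD, Reconj, Imconj, ReC, ImC, Rerc, Imrc) /=.
rewrite !exprS; ring.
Qed.

Lemma bloch_norm (a p : R) : (bloch a p).1.1 ^+ 2 + (bloch a p).1.2 ^+ 2 + (bloch a p).2 ^+ 2 = 1.
Proof.
rewrite /bloch /=.
have h1 := cos2Dsin2 a; have h2 := cos2Dsin2 p.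
transitivity (sin a ^+ 2 * (cos p ^+ 2 + sin p ^+ 2) + cos a ^+ 2); first ring.
rewrite h2 mulr1; lra.
Qed.

Lemma pd_norm (a p : R) : RE (pauli_dot (bloch a p) false true) ^+ 2
   + IM (pauli_dot (bloch a p) false true) ^+ 2 = sin a ^+ 2.
Proof.
rewrite /bloch /=.
transitivity (sin a ^+ 2 * (cos p ^+ 2 + sin p ^+ 2)); first ring.
by rewrite cos2Dsin2 mulr1.
Qed.

Lemma sin1_bloch (a p : R) : 0 <= a <= pi -> sin a ^+ 2 = 1 -> bloch a p = (cos p, sin p, 0).
Proof.
move=> ha hs; have s0 := sin_ge0_pi ha.
have s1 : sin a = 1.
  by move/eqP: hs; rewrite sqrf_eq1 => /orP[/eqP //|/eqP h]; lra.
have c0 : cos a = 0.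
  have h := cos2Dsin2 a; rewrite hs in h.
  by apply/eqP; rewrite -sqrf_eq0; apply/eqP; lra.
by rewrite /bloch s1 c0 !mul1r.
Qed.

Lemma cos1_bloch (a p : R) : cos a ^+ 2 = 1 -> bloch a p = (0, 0, 1) \/ bloch a p = (0, 0, -1).
Proof.
move=> hc.
have s0 : sin a = 0.
  have h := cos2Dsin2 a; rewrite hc in h.
  by apply/eqP; rewrite -sqrf_eq0; apply/eqP; lra.
rewrite /bloch s0 !mul0r.
by move/eqP: hc; rewrite sqrf_eq1 => /orP[/eqP ->|/eqP ->]; [left|right].
Qed.

Lemma sin2_bnd (a : R) : 0 <= sin a ^+ 2 <= 1.
Proof. have h1 := cos2Dsin2 a; have h2 := sqr_ge0 (cos a); have h3 := sqr_ge0 (sin a). by apply/andP; split; lra. Qed.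
Lemma cos2_bnd (a : R) : 0 <= cos a ^+ 2 <= 1.
Proof. have h1 := cos2Dsin2 a; have h2 := sqr_ge0 (cos a); have h3 := sqr_ge0 (sin a). by apply/andP; split; lra. Qed.

End H.


Theorem theorem2 (R : realType) (N : nat) (hN : (3 <= N)%N)
  (al al' ph ph' : 'I_N -> R)
  (hal : forall j, 0 <= al j <= pi) (hal' : forall j, 0 <= al' j <= pi)
  (hND : ND al al')
  (hI : I_CHSH al al' ph ph' = Complex (2 * Num.sqrt 2) 0 \/
        I_CHSH al al' ph ph' = Complex (- (2 * Num.sqrt 2)) 0) :
  let case_i := forall j : 'I_N, (j < N.-1)%N ->
      (bloch (al j) (ph j) = (0, 0, 1) \/ bloch (al j) (ph j) = (0, 0, -1)) /\
      bloch (al' j) (ph' j) = (cos (ph' j), sin (ph' j), 0) in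
  let case_ii := forall j : 'I_N, (j < N.-1)%N ->
      bloch (al j) (ph j) = (cos (ph j), sin (ph j), 0) /\
      (bloch (al' j) (ph' j) = (0, 0, 1) \/ bloch (al' j) (ph' j) = (0, 0, -1)) in
  let case_iii := forall j : 'I_N, (j < N.-1)%N ->
      bloch (al j) (ph j) = (cos (ph j), sin (ph j), 0) /\
      bloch (al' j) (ph' j) = (cos (ph' j), sin (ph' j), 0) in
  (case_i \/ case_ii \/ case_iii) /\ (odd N -> case_iii).
Proof.
case: N hN al al' ph ph' hal hal' hND hI => [|[|[|m]]] // _ al al' ph ph' hal hal' _ hI.
move=> ci cii ciii.
pose w (i : 'I_m.+2) : 'I_m.+3 := widen_ord (leqnSn m.+2) i.
pose A (a : bool) := if a then al' else al.
pose F (a : bool) := if a then ph' else ph.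
pose vA a i := bloch (A a (w i)) (F a (w i)).
pose wB b := bloch (A b ord_max) (F b ord_max).
have hA : forall a j, 0 <= A a j <= pi by case.
have Hsplit : forall a b r c, \prod_j chsh_ops al al' ph ph' a b j r c =
    (\prod_i pauli_dot (vA a i) r c) * pauli_dot (wB b) r c.
  move=> a b r c; rewrite big_ord_recr /=; congr (_ * _).
    by apply: eq_bigr => i _; rewrite /chsh_ops /= ltn_ord; case: a.
  by rewrite /chsh_ops /= ltnn; case: b.
pose E a b := RE (expect (@GHZ R m.+3) (chsh_ops al al' ph ph' a b)).
have hRe : RE (I_CHSH al al' ph ph') = E false false + E false true + E true false - E true true.
  rewrite /I_CHSH !big_bool /= !ReD expr1 expr0 mulN1r !mul1r ReN /E; ring.
pose c a := \prod_i (vA a i).2.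
pose P a := \prod_i pauli_dot (vA a i) false true.
pose x b := (wB b).1.1. pose y b := (wB b).1.2. pose z b := (wB b).2.
pose r : R := Num.sqrt 2.
have hr : r * r = 2 by rewrite -expr2 sqr_sqrtr // ler0n.
have hs : ((Num.sqrt 2)^-1) ^+ 2 = 2^-1 :> R by rewrite exprVn expr2 -/r hr.
have hE : forall a b, E a b = 2^-1 * (c a * z b * (1 - (-1) ^+ m) + 2 * (RE (P a) * x b + IM (P a) * y b)).
  by move=> a b; rewrite /E (@Re_expect R m _ _ _ (Hsplit a b)) hs.
have [e [he heq]] : exists e : R, e * e = 1 /\ RE (I_CHSH al al' ph ph') = e * 2 * r.
  case: hI => ->; [exists 1 | exists (-1)]; rewrite /= /r; split; ring.
rewrite hRe !hE in heq.
have hvb : forall b, x b ^+ 2 + y b ^+ 2 + z b ^+ 2 = 1 by move=> b; exact: bloch_norm.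
have hpq : forall a, RE (P a) ^+ 2 + IM (P a) ^+ 2 = \prod_i sin (A a (w i)) ^+ 2.
  by move=> a; rewrite PDnorm; apply: eq_bigr => i _; exact: pd_norm.
have hc : forall a, c a ^+ 2 = \prod_i cos (A a (w i)) ^+ 2.
  by move=> a; rewrite /c -prodrXl.
have hS1 : forall a, \prod_i sin (A a (w i)) ^+ 2 <= 1.
  by move=> a; apply: prodr_ile1 => i _; exact: sin2_bnd.
have hSG : forall a, \prod_i sin (A a (w i)) ^+ 2 + \prod_i cos (A a (w i)) ^+ 2 <= 1.
  move=> a; apply: (@prod_sum_le1 R m.+1 (fun i => sin (A a (w i)) ^+ 2) (fun i => cos (A a (w i)) ^+ 2)).
  - by move=> i; exact: sin2_bnd.
  - by move=> i; exact: cos2_bnd.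
  - by move=> i; rewrite addrC cos2Dsin2.
have site : forall j : 'I_m.+3, (j < (m.+3).-1)%N -> exists i : 'I_m.+2, j = w i.
  by move=> j hj; exists (Ordinal hj); apply: val_inj.
have hIII : (forall a i, sin (A a (w i)) ^+ 2 = 1) -> ciii.
  move=> h j /site [i ->]; split.
    by apply: sin1_bloch; [exact: hal | exact: (h false i)].
  by apply: sin1_bloch; [exact: hal' | exact: (h true i)].
have [om|em] := boolP (odd m).
- have sg : (-1) ^+ m = -1 :> R by rewrite -signr_odd om.
  rewrite sg in heq.
  have hm : 1 * c false * (z false + z true) + RE (P false) * (x false + x true) + IM (P false) * (y false + y true)
     + (1 * c true * (z false - z true) + RE (P true) * (x false - x true) + IM (P true) * (y false - y true)) = e * 2 * r.
    by rewrite -heq; field.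
  have b1 : forall a, RE (P a) ^+ 2 + IM (P a) ^+ 2 + 1 * c a ^+ 2 <= 1.
    by move=> a; rewrite mul1r hpq hc hSG.
  have [u0 u1] := @core R r e 1 (RE (P false)) (IM (P false)) (c false) (RE (P true)) (IM (P true)) (c true)
     (x false) (y false) (z false) (x true) (y true) (z true) hr he (mulr1 _) (hvb false) (hvb true) (b1 false) (b1 true) hm.
  have hsum : forall a, \prod_i sin (A a (w i)) ^+ 2 + \prod_i cos (A a (w i)) ^+ 2 = 1.
    by case; [move: u1 | move: u0]; rewrite mul1r hpq hc.
  have hd : forall a, (forall i, sin (A a (w i)) ^+ 2 = 1) \/ (forall i, cos (A a (w i)) ^+ 2 = 1).
    move=> a; apply: (@prod_split01 R m (fun i => sin (A a (w i)) ^+ 2) (fun i => cos (A a (w i)) ^+ 2)).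
    - by move=> i; exact: sqr_ge0.
    - by move=> i; exact: sqr_ge0.
    - by move=> i; rewrite addrC cos2Dsin2.
    - exact: hsum.
  split; last by rewrite /= om.
  case: (hd false) => [s0|c0]; case: (hd true) => [s1|c1].
  - by right; right; apply: hIII; case.
  - right; left => j /site [i ->]; split.
      by apply: sin1_bloch; [exact: hal | exact: (s0 i)].
    exact: (@cos1_bloch R _ (ph' (w i)) (c1 i)).
  - left => j /site [i ->]; split.
      exact: (@cos1_bloch R _ (ph (w i)) (c0 i)).
    by apply: sin1_bloch; [exact: hal' | exact: (s1 i)].
  - exfalso.
    have P0 : forall a, (forall i, cos (A a (w i)) ^+ 2 = 1) -> RE (P a) = 0 /\ IM (P a) = 0.
      move=> a ha.
      have : \prod_i sin (A a (w i)) ^+ 2 = 0.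
        rewrite big_ord_recl.
        have := cos2Dsin2 (A a (w ord0)); rewrite ha => h.
        have -> : sin (A a (w ord0)) ^+ 2 = 0 by lra.
        by rewrite mul0r.
      rewrite -hpq => h0.
      have g1 := sqr_ge0 (RE (P a)); have g2 := sqr_ge0 (IM (P a)).
      by split; apply/eqP; rewrite -sqrf_eq0; apply/eqP; lra.
    have C1 : forall a, (forall i, cos (A a (w i)) ^+ 2 = 1) -> c a ^+ 2 = 1.
      by move=> a ha; rewrite hc; apply: big1 => i _; exact: ha.
    have zb : forall b, z b ^+ 2 <= 1.
      by move=> b; have := hvb b; have := sqr_ge0 (x b); have := sqr_ge0 (y b); lra.
    have [pf qf] := P0 false c0; have [pt qt] := P0 true c1.
    rewrite pf qf pt qt in heq.
    apply: (@core_z R r e (c false) (c true) (z false) (z true) hr he (C1 _ c0) (C1 _ c1) (zb _) (zb _)).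
    by rewrite -heq; field.
- have sg : (-1) ^+ m = 1 :> R by rewrite -signr_odd (negbTE em).
  rewrite sg in heq.
  have hm : 0 * c false * (z false + z true) + RE (P false) * (x false + x true) + IM (P false) * (y false + y true)
     + (0 * c true * (z false - z true) + RE (P true) * (x false - x true) + IM (P true) * (y false - y true)) = e * 2 * r.
    by rewrite -heq; field.
  have b0 : forall a, RE (P a) ^+ 2 + IM (P a) ^+ 2 + 0 * c a ^+ 2 <= 1.
    by move=> a; rewrite mul0r addr0 hpq hS1.
  have [u0 u1] := @core R r e 0 (RE (P false)) (IM (P false)) (c false) (RE (P true)) (IM (P true)) (c true)
     (x false) (y false) (z false) (x true) (y true) (z true) hr he (mulr0 _) (hvb false) (hvb true) (b0 false) (b0 true) hm.
  have hS : forall a i, sin (A a (w i)) ^+ 2 = 1.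
    move=> a i; apply: (@prod_eq1 R m.+2 (fun i => sin (A a (w i)) ^+ 2)).
      by move=> j; exact: sin2_bnd.
    by rewrite -hpq; case: a; [move: u1 | move: u0]; rewrite mul0r addr0.
  have h3 := hIII hS.
  by split; [right; right | move=> _].
Qed.
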